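(* Let $d\ge 1$, let $\mathcal A=\{A_n:n\ge2\}$ be the family defined below, and let $\mathcal B$ be any family of bounded convex sets in $\mathbb R^{d+1}$ each of which contains the cube $C=\{x\in\mathbb R^{d+1}: x_1=0,\ 0\le x_i\le 1 \text{ for } i=2,\dots,d+1\}$. Then $\mathcal F=\mathcal A\cup\mathcal B$ satisfies the $(d+1+2k,\,d+1+k)$-property for every integer $k\ge0$.
   Context: Let $e_1,\dots,e_{d+1}$ be the standard basis of $\mathbb R^{d+1}$. For $0\le\alpha\le1$, let $S_\alpha\subset\operatorname{span}(e_2,\dots,e_{d+1})$ be the $(d-1)$-dimensional simplex with vertices $e_2+\dots+e_k+\alpha e_{k+1}$ for $k=1,\dots,d$. For each integer $n\ge2$ let $I_n=\{te_1:t\ge n\}$ and $A_n=\operatorname{conv}(S_{1/n}\cup I_n)$. A family of at least $p$ sets satisfies the $(p,q)$-property if among any $p$ of its members there are $q$ with a common point. *)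

(* Defs.v *)
(* points of R^(d+1) are row vectors 'rV[R]_(d.+1) over an
   arbitrary real field R; coordinate x_j (1-based in the paper) is x 0 (j-1). *)
From HB Require Import structures.
From mathcomp Require Import all_boot all_order all_algebra.
Set Implicit Arguments. Unset Strict Implicit. Unset Printing Implicit Defensive.
Import Order.TTheory GRing.Theory Num.Theory.
Local Open Scope ring_scope.

Section Defs.
Variables (R : realFieldType) (d : nat).

Definition pt := 'rV[R]_(d.+1).
Definition pset := pt -> Prop.

Definition conv (X : pset) : pset := fun x =>
  exists (m : nat) (p : 'I_m -> pt) (w : 'I_m -> R),
    (forall i, X (p i)) /\ (forall i, 0 <= w i) /\
    \sum_(i < m) w i = 1 /\ x = \sum_(i < m) w i *: p i.

Definition convex (X : pset) : Prop :=
  forall x y t, X x -> X y -> 0 <= t -> t <= 1 -> X ((1 - t) *: x + t *: y).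

Definition bounded (X : pset) : Prop :=
  exists M : R, forall x, X x -> forall i, `|x 0 i| <= M.

(* standard basis vector with index i (0-based); e_1 of the paper is ebasis ord0 *)
Definition ebasis (i : 'I_(d.+1)) : pt := \row_j ((j == i)%:R).

(* vertex e_2 + ... + e_k + alpha e_{k+1} (k = 1..d): 0-based coordinates
   1..k-1 equal 1, coordinate k equals alpha, others 0 *)
Definition svert (alpha : R) (k : nat) : pt :=
  \row_j (if (0 < (j : nat))%N && ((j : nat) < k)%N then 1
          else if (j : nat) == k then alpha else 0).

Definition Ssimplex (alpha : R) : pset :=
  conv (fun x => exists k, (1 <= k <= d)%N /\ x = svert alpha k).

Definition Iray (n : nat) : pset :=
  fun x => exists t : R, n%:R <= t /\ x = t *: ebasis ord0.

Definition An (n : nat) : pset :=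
  conv (fun x => Ssimplex (n%:R)^-1 x \/ Iray n x).

Definition cube : pset :=
  fun x => x 0 ord0 = 0 /\ forall i : 'I_(d.+1), i != ord0 -> 0 <= x 0 i <= 1.

Definition distinct_sets (p : nat) (f : 'I_p -> pset) : Prop :=
  forall i j, i != j -> ~ (forall x, f i x <-> f j x).

Definition pq_property (F : pset -> Prop) (p q : nat) : Prop :=
  (exists f : 'I_p -> pset, (forall i, F (f i)) /\ distinct_sets f) /\
  forall f : 'I_p -> pset, (forall i, F (f i)) -> distinct_sets f ->
    exists g : 'I_q -> 'I_p, injective g /\ exists x, forall j, f (g j) x.

End Defs.

(* Main.v *)
Require Import Defs.
From HB Require Import structures.
From mathcomp Require Import all_boot all_order all_algebra.
From mathcomp Require Import ring lra zify.
From Stdlib Require Import ClassicalEpsilon.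
Set Implicit Arguments. Unset Strict Implicit. Unset Printing Implicit Defensive.
Import Order.TTheory GRing.Theory Num.Theory.
Local Open Scope ring_scope.

Definition gstep (R : realFieldType) (a : R) (g : nat -> R) (j : nat) : R :=
  match j with 0%N => 1 | j'.+1 => a * g j' + (1 - a) * g j end.
Definition G (R : realFieldType) (s : seq R) : nat -> R :=
  foldr (@gstep R) (fun j => (j == 0%N)%:R) s.

Lemma G0 (R : realFieldType) (s : seq R) : G s 0 = 1.
Proof. by case: s. Qed.

Lemma G_swap (R : realFieldType) (a b : R) s j :
  G [:: a, b & s] j = G [:: b, a & s] j.
Proof.
case: j => [|[|j]] //=; rewrite ?G0; ring.
Qed.

Lemma G_rem (R : realFieldType) (s : seq R) x : x \in s ->
  forall j, G s j = G (x :: rem x s) j.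
Proof.
elim: s => // a s IH; rewrite in_cons => /orP [/eqP ->|xs] j.
  by rewrite /= eqxx.
have [->|ax] := eqVneq a x; first by rewrite /= eqxx.
rewrite /= (negbTE ax).
transitivity (G [:: a, x & rem x s] j); last exact: G_swap.
case: j => [|j] //=; by rewrite !IH.
Qed.

Definition in01 (R : realFieldType) (s : seq R) := all (fun a => 0 <= a <= 1) s.

Lemma G_bounds (R : realFieldType) (s : seq R) : in01 s ->
  forall j, [/\ 0 <= G s j <= 1, G s j.+1 <= G s j & ((size s < j)%N -> G s j = 0)].
Proof.
elim: s => [_ j|a s IH] /=.
  by case: j => [|j] //=; split; rewrite ?lexx ?ler01.
case/andP=> /andP [a0 a1] /IH {}IH j.
case: j => [|j] /=.
  have [/andP[h0 h1] h2 h3] := IH 0%N.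
  rewrite G0 in h0 h1 h2 *; split => //; first by rewrite ler01 lexx.
  nra.
have [/andP[h0 h1] h2 h3] := IH j.
have [/andP[g0 g1] g2 g3] := IH j.+1.
split.
- apply/andP; split; nra.
- nra.
- move=> hs; rewrite h3 ?g3; first ring; lia.
Qed.
Lemma tele (R : realFieldType) (T : nat -> R) n :
  \sum_(i < n) (T i - T i.+1) = T 0%N - T n.
Proof.
elim: n => [|n IH]; first by rewrite big_ord0 subrr.
rewrite big_ord_recr /= IH; ring.
Qed.

Lemma sum_coord (R : realFieldType) (T : nat -> R) (al : R) j' n :
  \sum_(i < n) (T i - T i.+1) *
    (if (0 < j'.+1)%N && (j'.+1 < i.+1)%N then 1 else if j'.+1 == i.+1 then al else 0)
  = if (j' < n)%N then T j'.+1 - T n + al * (T j' - T j'.+1) else 0.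
Proof.
elim: n => [|n IH]; first by rewrite big_ord0.
rewrite big_ord_recr /= IH.
case: (ltngtP j' n) => h.
- have -> : (j' < n.+1)%N by lia.
  have -> : (j'.+1 < n.+1)%N by lia.
  rewrite /=; ring.
- have -> : (j' < n.+1)%N = false by lia.
  have -> : (j'.+1 < n.+1)%N = false by lia.
  have -> : (j'.+1 == n.+1) = false by apply/eqP; lia.
  ring.
- subst; rewrite ltnSn ltnn eqxx /=; ring.
Qed.

Definition ypt (R : realFieldType) d (s : seq R) : pt R d :=
  \row_(j < d.+1) (if (j : nat) == 0%N then 0 else G s j).

Lemma ypt_cube (R : realFieldType) d (s : seq R) : in01 s -> cube (ypt d s).
Proof.
move=> hs; split; first by rewrite mxE.
move=> i hi; rewrite mxE.
have -> : ((i : nat) == 0%N) = false by apply/negbTE; move: hi; apply: contra => /eqP h; apply/eqP/val_inj.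
by have [] := G_bounds hs i.
Qed.

Lemma ypt_S (R : realFieldType) d (s r : seq R) (al : R) :
  (0 <= al <= 1) -> in01 r -> (size r < d)%N ->
  (forall j, G s j = G (al :: r) j) -> Ssimplex al (ypt d s).
Proof.
move=> ha hr hsz hG.
exists d, (fun i : 'I_d => svert d al i.+1), (fun i : 'I_d => G r i - G r i.+1).
split; first by move=> i; exists i.+1; split => //; apply/andP; split => //.
split; first by move=> i; have [_ h _] := G_bounds hr i; rewrite subr_ge0.
split; first by rewrite (tele (G r)) G0; have [_ _ ->] := G_bounds hr d; rewrite ?subr0.
apply/rowP => j; rewrite !mxE summxE.
under eq_bigr => i _ do rewrite mxE [svert _ _ _ _ _]mxE.
case: j => [[|j'] hj] /=.
  by rewrite big1 // => i _; rewrite mulr0.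
rewrite (sum_coord (G r)).
have -> : (j' < d)%N by lia.
have [_ _ ->] := G_bounds hr d => //.
rewrite hG /=; ring.
Qed.
Lemma conv1 (R : realFieldType) d (X : pset R d) x : X x -> conv X x.
Proof.
move=> hx; exists 1%N, (fun _ => x), (fun _ => 1).
split; first by []. split; first by move=> _; exact: ler01.
by rewrite !big_ord1 scale1r.
Qed.

Lemma conv_lb (R : realFieldType) d (X : pset R d) (i1 i2 : 'I_d.+1) (a b c : R) :
  (forall x, X x -> c <= a * x 0 i1 + b * x 0 i2) ->
  forall x, conv X x -> c <= a * x 0 i1 + b * x 0 i2.
Proof.
move=> hX x [m [p [w [hp [hw [hs ->]]]]]].
rewrite !summxE.
under eq_bigr => i _ do rewrite mxE.
under [X in _ <= _ + b * X]eq_bigr => i _ do rewrite mxE.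
rewrite !mulr_sumr -big_split /=.
apply: (@le_trans _ _ (\sum_(i < m) w i * c)); first by rewrite -mulr_suml hs mul1r.
apply: ler_sum => i _.
have := hX _ (hp i); have := hw i; nra.
Qed.

Lemma ray_in (R : realFieldType) d (n N : nat) : (n <= N)%N ->
  @An R d n (N%:R *: ebasis R ord0).
Proof.
move=> h; apply: conv1; right; exists N%:R; split => //.
by rewrite ler_nat.
Qed.

Lemma ray_notin (R : realFieldType) d (hd : (0 < d)%N) (n m : nat) :
  (2 <= m)%N -> (n < m)%N -> ~ @An R d m (n%:R *: ebasis R ord0).
Proof.
move=> hm hnm hA.
pose i1 : 'I_d.+1 := Ordinal (hd : (1 < d.+1)%N).
have mpos : 0 < (m%:R : R) by rewrite ltr0n; lia.
have H : forall x : pt R d, Ssimplex (m%:R)^-1 x \/ Iray m x ->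
   m%:R <= 1 * x 0 ord0 + m%:R ^+ 2 * x 0 i1.
move=> x [hy|[t [ht ->]]].
  apply: (conv_lb _ hy).
  move=> z [k [/andP [k1 kd] ->]]; rewrite !mxE /=.
  have -> : (0 == k) = false by apply/eqP; lia.
  rewrite mul1r add0r.
  case: k k1 kd => [|[|k]] // _ _ /=.
    rewrite expr2 -mulrA mulfV ?mulr1 //; exact: lt0r_neq0.
  rewrite mulr1.
  have : 1 <= (m%:R : R) by rewrite ler1n; lia.
  nra.
  by rewrite !mxE /= mulr1 mulr0 mulr0 addr0 mul1r.
have := conv_lb H hA.
rewrite !mxE /= mulr1 mulr0 mulr0 addr0 mul1r ler_nat; lia.
Qed.
Lemma classify (T : Type) (I : Type) (P : T -> nat -> Prop) (Q : T -> Prop) (f : I -> T) :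
  (forall i, (exists n, P (f i) n) \/ Q (f i)) ->
  exists (isA : I -> bool) (nA : I -> nat),
    forall i, if isA i then P (f i) (nA i) else Q (f i).
Proof.
move=> h.
exists (fun i => if excluded_middle_informative (exists n, P (f i) n) then true else false).
exists (fun i => match excluded_middle_informative (exists n, P (f i) n) with
   | left e => proj1_sig (constructive_indefinite_description _ e) | right _ => 0%N end).
move=> i; case: excluded_middle_informative => [e|ne].
  exact: proj2_sig (constructive_indefinite_description _ e).
by case: (h i).
Qed.

Lemma select p q d k (P : pred 'I_p) : p = (q + k)%N -> q = (d.+1 + k)%N ->
  exists L : seq 'I_p, [/\ uniq L, size L = q & (all P L \/ (count P L <= d)%N)].
Proof.
move=> hp hq.
have hab : (#|P| + #|predC P| = p)%N by rewrite cardC card_ord.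
case: (leqP q #|P|) => hqa.
  exists (take q (enum P)); split.
  - exact/take_uniq/enum_uniq.
  - by rewrite size_takel // -cardE.
  - by left; apply/allP => x /mem_take; rewrite mem_enum.
set b := minn #|predC P| q.
exists (take b (enum (predC P)) ++ take (q - b) (enum P)); split.
- rewrite cat_uniq; apply/and3P; split; try exact/take_uniq/enum_uniq.
  apply/hasPn => x /mem_take; rewrite mem_enum => Px.
  apply/negP => /mem_take; rewrite mem_enum !inE.
  by move=> /negP; apply.
- rewrite size_cat !size_takel; rewrite -?cardE /b; clear b; move: hab hqa; set c := #|predC P|; set a := #|P|; lia.
- right; rewrite count_cat.
  have -> : count P (take b (enum (predC P))) = 0%N.
    rewrite (@eq_in_count _ _ pred0) ?count_pred0 // => x /mem_take.
    by rewrite mem_enum inE /= => /negbTE.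
  have := count_size P (take (q - b) (enum P)).
  rewrite size_takel; rewrite -?cardE /b; clear b; move: hab hqa; set c := #|predC P|; set a := #|P|; lia.
Qed.

Theorem lemma2p4 (R : realFieldType) (d : nat) (hd : (1 <= d)%N)
  (B : pset R d -> Prop)
  (hB : forall X, B X ->
          bounded X /\ convex X /\ (forall x, cube x -> X x))
  (k : nat) :
  pq_property (fun X => (exists n : nat, (2 <= n)%N /\ X = @An R d n) \/ B X)
    (d + 1 + 2 * k) (d + 1 + k).
Proof.
split.
  exists (fun i : 'I_(d + 1 + 2 * k) => @An R d (i + 2)); split.
    by move=> i; left; exists (i + 2)%N; split => //; rewrite leq_addl.
  move=> i j hij heq.
  have [h|h|h] := ltngtP i j.
  - apply: (@ray_notin R d hd (i + 2) (j + 2)); [lia|lia|].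
    by apply/heq; apply: ray_in.
  - apply: (@ray_notin R d hd (j + 2) (i + 2)); [lia|lia|].
    by apply/heq; apply: ray_in.
  - by move: hij; rewrite (val_inj h) eqxx.
move=> f hf _.
have [isA [nA hc]] := @classify _ _ (fun X n => (2 <= n)%N /\ X = @An R d n) B f hf.
have [L [uL sL hL]] := @select (d + 1 + 2 * k) (d + 1 + k) d k isA (ltac:(lia)) (ltac:(lia)).
have x0 : 'I_(d + 1 + 2 * k) := Ordinal (ltac:(lia) : (0 < d + 1 + 2 * k)%N).
exists (fun j : 'I_(d + 1 + k) => nth x0 L j); split.
  by move=> i j /eqP; rewrite nth_uniq ?sL // => /eqP; apply: val_inj.
have memL (j : 'I_(d + 1 + k)) : nth x0 L j \in L by rewrite mem_nth // sL.
case: hL => [allA | cnt].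
  exists ((\max_i nA i)%:R *: ebasis R ord0) => j.
  have := hc (nth x0 L j); rewrite (allP allA _ (memL j)) => -[_ ->].
  apply: ray_in. exact: leq_bigmax.
pose s := map (fun i => (nA i)%:R^-1 : R) (filter isA L) ++ nseq (d - count isA L) 1.
have s01 : in01 s.
  apply/allP => y; rewrite mem_cat => /orP [/mapP [i]|/nseqP [-> _]]; last first.
    by rewrite ler01 lexx.
  rewrite mem_filter => /andP [hi _] ->.
  have := hc i; rewrite hi => -[h2 _].
  have np : 0 < (nA i)%:R :> R by rewrite ltr0n; lia.
  rewrite invr_ge0 ltW //= invf_le1 // ler1n; lia.
have ssz : size s = d by rewrite size_cat size_map size_filter size_nseq; lia.
exists (ypt d s) => j.
have := hc (nth x0 L j); case: ifP => hA.
  move=> [h2 ->]; apply: conv1; left.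
  set al := (nA (nth x0 L j))%:R^-1 : R.
  have als : al \in s.
    by rewrite mem_cat; apply/orP; left; apply: map_f; rewrite mem_filter hA memL.
  apply: (@ypt_S R d s (rem al s)).
  - exact: (allP s01 al als).
  - by apply/allP => y /mem_rem => ys; exact: (allP s01 y ys).
  - rewrite size_rem // ssz; lia.
  - exact: G_rem.
move=> hb; exact: (hB _ hb).2.2 _ (ypt_cube d s01).
Qed.
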